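(* Let $n\le k$ be positive integers. For every $\sigma$-structure $\mathcal{A}$: (a) there is a (unique) homomorphism $\epsilon^{n,k}_{\mathcal{A}}:\mathbb{H}_{n,k}\mathcal{A}\to\mathcal{A}$ with $\epsilon_{\mathcal{A}}=\epsilon^{n,k}_{\mathcal{A}}\circ q_n$; (b) the map $q_n\circ\mathbb{T}_kq_n\circ\delta_{\mathcal{A}}:\mathbb{T}_k\mathcal{A}\to\mathbb{H}_{n,k}\mathbb{H}_{n,k}\mathcal{A}$ is constant on $\approx_n$-classes, so it induces a well-defined map $\delta^{n,k}_{\mathcal{A}}:\mathbb{H}_{n,k}\mathcal{A}\to\mathbb{H}_{n,k}\mathbb{H}_{n,k}\mathcal{A}$ with $\delta^{n,k}_{\mathcal{A}}\circ q_n=q_n\circ\mathbb{T}_kq_n\circ\delta_{\mathcal{A}}$. The families $\epsilon^{n,k}$ and $\delta^{n,k}$ are natural transformations $\mathbb{H}_{n,k}\Rightarrow\mathrm{Id}$ and $\mathbb{H}_{n,k}\Rightarrow\mathbb{H}_{n,k}\mathbb{H}_{n,k}$ on the category of $\sigma$-structures and homomorphisms.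
   Context: For $m\in\mathbb{N}$, $[m]=\{1,\dots,m\}$. For a $\sigma$-structure $\mathcal{A}$, $\mathbb{T}_k\mathcal{A}$ has universe the nonempty finite lists over $A\times[k]$; $\epsilon_{\mathcal{A}}(s)$ is the first component of the last pair of $s$; $(s_1,\dots,s_r)\in R^{\mathbb{T}_k\mathcal{A}}$ iff the $s_i$ are pairwise prefix-comparable, $(\epsilon_{\mathcal{A}}(s_1),\dots,\epsilon_{\mathcal{A}}(s_r))\in R^{\mathcal{A}}$, and whenever $s_i$ is a prefix of $s_j$ ending with $(a,p)$, no prefix of $s_j$ properly extending $s_i$ ends with a pair $(a',p)$. For a homomorphism $f$, $\mathbb{T}_kf$ applies $f$ to first components. $\delta_{\mathcal{A}}[(a_1,p_1),\dots,(a_m,p_m)]=[(s_1,p_1),\dots,(s_m,p_m)]$ with $s_i=[(a_1,p_1),\dots,(a_i,p_i)]$ (these are the counit and comultiplication of the pebbling comonad $\mathbb{T}_k$). A list over $A\times[k]$ is basic if it has at most $n$ pairs with distinct pebble indices; $S_n(s)=[s]$ if $s$ is basic, else $S_n(s)=[a];S_n(t)$ with $s=a\cdot t$ and $a$ the longest basic prefix. For $p\in[k]$ and $S_n(s)=t;[s']$ ($s'$ the last block), $\alpha_n(s,p)=t;[s']$ if $|s'|=n$ or $p$ occurs in $s'$, else $t$. $[s;(a,i)]\approx_n[t;(b,j)]$ iff $a=b$ and $\alpha_n(s,i)=\alpha_n(t,j)$. $\mathbb{H}_{n,k}\mathcal{A}=\mathbb{T}_k\mathcal{A}/{\approx_n}$,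 where a tuple of classes is related iff some choice of representatives is related in $\mathbb{T}_k\mathcal{A}$; $q_n$ denotes the quotient map $\mathbb{T}_k\mathcal{C}\to\mathbb{H}_{n,k}\mathcal{C}$ for any structure $\mathcal{C}$; $\mathbb{H}_{n,k}f$ is the map induced by $\mathbb{T}_kf$. *)

(* Defs.v *)
From Stdlib Require Import ClassicalEpsilon.
From mathcomp Require Import all_boot.
Set Implicit Arguments. Unset Strict Implicit. Unset Printing Implicit Defensive.

Record signature := Signature { sym : Type; ar : sym -> nat }.

Record structure (sg : signature) := Structure {
  car :> Type;
  rel : forall R : sym sg, ('I_(ar R) -> car) -> Prop }.

Definition is_hom (sg : signature) (A B : structure sg) (f : A -> B) : Prop :=
  forall (R : sym sg) (t : 'I_(ar R) -> A), @rel _ A R t -> @rel _ B R (fun i => f (t i)).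

Section Pebbling.
Variable k : nat.

(* Pebble indices [k] are represented by 'I_k (0-based). *)
(* A nonempty list over X * [k] is represented as a pair (s, x) standing for
   the list  rcons s x  (= s ; x). *)
Definition Tcar (X : Type) := (seq (X * 'I_k) * (X * 'I_k))%type.

Definition tolist (X : Type) (u : Tcar X) : seq (X * 'I_k) := rcons u.1 u.2.

Definition is_prefix (Y : Type) (l1 l2 : seq Y) : Prop := exists w, l2 = l1 ++ w.

Definition comparable (Y : Type) (l1 l2 : seq Y) : Prop :=
  is_prefix l1 l2 \/ is_prefix l2 l1.

Definition eps (X : Type) (u : Tcar X) : X := u.2.1.

Definition peb_cond (X : Type) (u v : Tcar X) : Prop :=
  forall (w : seq (X * 'I_k)) (y : X * 'I_k),
    is_prefix (tolist u ++ rcons w y) (tolist v) -> y.2 <> u.2.2.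

Definition T (sg : signature) (A : structure sg) : structure sg :=
  @Structure sg (Tcar A) (fun R t =>
    (forall i j, comparable (tolist (t i)) (tolist (t j))) /\
    @rel _ A R (fun i => eps (t i)) /\
    (forall i j, peb_cond (t i) (t j))).

Definition Tmap (X Y : Type) (f : X -> Y) (u : Tcar X) : Tcar Y :=
  (map (fun y => (f y.1, y.2)) u.1, (f u.2.1, u.2.2)).

(* comultiplication: delta [(a1,p1),...,(am,pm)] = [(s1,p1),...,(sm,pm)] *)
Definition delta (X : Type) (u : Tcar X) : Tcar (Tcar X) :=
  ([seq ((take i u.1, nth u.2 u.1 i), (nth u.2 u.1 i).2) | i <- iota 0 (size u.1)],
   (u, u.2.2)).

Variable n : nat.

Definition basicb (X : Type) (s : seq (X * 'I_k)) : bool :=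
  (size s <= n) && uniq (map snd s).

Definition lbp (X : Type) (s : seq (X * 'I_k)) : nat :=
  \max_(m < (size s).+1 | basicb (take m s)) m.

Fixpoint blocks_fuel (X : Type) (fuel : nat) (s : seq (X * 'I_k))
  : seq (seq (X * 'I_k)) :=
  match fuel with
  | 0 => [:: s]
  | f.+1 => if basicb s then [:: s]
            else take (lbp s) s :: blocks_fuel f (drop (lbp s) s)
  end.

Definition Sn (X : Type) (s : seq (X * 'I_k)) := blocks_fuel (size s) s.

Definition alpha (X : Type) (s : seq (X * 'I_k)) (p : 'I_k) : seq (seq (X * 'I_k)) :=
  let bl := Sn s in
  let t := take (size bl).-1 bl in
  let s' := last [::] bl in
  if (size s' == n) || (p \in map snd s') then bl else t.

Definition approx (X : Type) (u v : Tcar X) : Prop :=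
  u.2.1 = v.2.1 /\ alpha u.1 u.2.2 = alpha v.1 v.2.2.

Definition Hcar (X : Type) := {P : Tcar X -> Prop | exists u, P = approx u}.

Definition q (X : Type) (u : Tcar X) : Hcar X :=
  exist _ (approx u) (ex_intro _ u erefl).

Definition H (sg : signature) (A : structure sg) : structure sg :=
  @Structure sg (Hcar A) (fun R t =>
    exists t' : 'I_(ar R) -> Tcar A, (forall i, q (t' i) = t i) /\ @rel _ (T A) R t').

Definition rep (X : Type) (c : Hcar X) : Tcar X :=
  proj1_sig (constructive_indefinite_description _ (proj2_sig c)).

Definition Hmap (X Y : Type) (f : X -> Y) (c : Hcar X) : Hcar Y :=
  q (Tmap f (rep c)).

End Pebbling.

Arguments q {k} n {X} u.
Arguments Hmap {k} n {X Y} f c.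
Arguments approx {k} n {X} u v.

(* Main.v *)
Require Import Defs.
From mathcomp Require Import all_boot zify.
From Stdlib Require Import FunctionalExtensionality PropExtensionality ProofIrrelevance ClassicalEpsilon.
Set Implicit Arguments. Unset Strict Implicit. Unset Printing Implicit Defensive.

Lemma take_reshape (T0 : Type) (sh : seq nat) (s : seq T0) m :
  take m (reshape sh s) = reshape (take m sh) s.
Proof.
elim: sh s m => [|x sh IH] s [|m] //=. by rewrite IH.
Qed.

Lemma reshape_take (T0 : Type) (sh : seq nat) (s : seq T0) :
  reshape sh s = reshape sh (take (sumn sh) s).
Proof.
elim: sh s => [|x sh IH] s //=.
by rewrite take_takel ?leq_addr // addnC -take_drop -IH.
Qed.

Lemma flatten_reshape (T0 : Type) (sh : seq nat) (s : seq T0) :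
  flatten (reshape sh s) = take (sumn sh) s.
Proof.
elim: sh s => [|x sh IH] s /=; first by rewrite take0.
by rewrite IH -takeD.
Qed.

Section L.
Variables (k n : nat).

Lemma basicb_snd X Y (s : seq (X * 'I_k)) (s' : seq (Y * 'I_k)) :
  map snd s = map snd s' -> basicb n s = basicb n s'.
Proof.
move=> E; rewrite /basicb -(size_map snd s) -(size_map snd s') E //.
Qed.

Lemma lbp_snd X Y (s : seq (X * 'I_k)) (s' : seq (Y * 'I_k)) :
  map snd s = map snd s' -> lbp n s = lbp n s'.
Proof.
move=> E; rewrite /lbp -(size_map snd s) -(size_map snd s') E.
apply: eq_bigl => m; apply: basicb_snd; by rewrite !map_take E.
Qed.

Lemma blocks_snd X Y fuel (s : seq (X * 'I_k)) (s' : seq (Y * 'I_k)) :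
  map snd s = map snd s' ->
  map (map snd) (blocks_fuel n fuel s) = map (map snd) (blocks_fuel n fuel s').
Proof.
elim: fuel s s' => [|f IH] s s' E /=; first by rewrite E.
rewrite (basicb_snd E) (lbp_snd E); case: ifP => _ /=; first by rewrite E.
by rewrite !map_take E (IH _ (drop (lbp n s') s')) // !map_drop E.
Qed.

Lemma blocks_flatten X fuel (s : seq (X * 'I_k)) :
  flatten (blocks_fuel n fuel s) = s.
Proof.
elim: fuel s => [|f IH] s /=; first by rewrite cats0.
case: ifP => _ /=; first by rewrite cats0.
by rewrite IH cat_take_drop.
Qed.

Lemma Sn_reshape X (s : seq (X * 'I_k)) : Sn n s = reshape (shape (Sn n s)) s.
Proof.
transitivity (reshape (shape (Sn n s)) (flatten (Sn n s))); first by rewrite flattenK.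
by rewrite /Sn blocks_flatten.
Qed.

Lemma alpha_rel X Y (s : seq (X * 'I_k)) (s' : seq (Y * 'I_k)) p :
  map snd s = map snd s' -> alpha n s' p = reshape (shape (alpha n s p)) s'.
Proof.
move=> E.
have Hs : map (map snd) (Sn n s) = map (map snd) (Sn n s').
  by rewrite /Sn -(size_map snd s) -(size_map snd s') -E; apply: blocks_snd.
have Hsh : shape (Sn n s) = shape (Sn n s').
  have Hm : forall (Z : Type) (bl : seq (seq (Z * 'I_k))),
      shape bl = map size (map (map snd) bl).
    by move=> Z bl; rewrite -map_comp; apply: eq_map => b /=; rewrite size_map.
  by rewrite !Hm Hs.
have Hl : map snd (last [::] (Sn n s)) = map snd (last [::] (Sn n s')).
  by rewrite -!(last_map (map snd)) Hs.
have Hsz : size (Sn n s) = size (Sn n s').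
  by rewrite -(size_map (map snd) (Sn n s)) Hs size_map.
rewrite /alpha -(size_map snd (last _ (Sn n s))) Hl size_map.
case: ifP => _.
  by rewrite Sn_reshape Hsh.
have E2 : Sn n s' = reshape (shape (Sn n s)) s' by rewrite Hsh -Sn_reshape.
by rewrite E2 size_reshape take_reshape /shape map_take size_map.
Qed.

Lemma alpha_self X (s : seq (X * 'I_k)) p :
  alpha n s p = reshape (shape (alpha n s p)) s.
Proof. exact: alpha_rel. Qed.

Lemma alpha_map X Y (g : X * 'I_k -> Y * 'I_k) (s : seq (X * 'I_k)) p :
  (forall y, (g y).2 = y.2) -> alpha n (map g s) p = map (map g) (alpha n s p).
Proof.
move=> Hg.
rewrite (alpha_rel (s := s)); last by rewrite -map_comp; apply: eq_map => y /=; rewrite Hg.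
by rewrite -map_reshape -alpha_self.
Qed.

End L.

Section M.
Variables (k n : nat).

Definition Lgen X (d : X * 'I_k) (s : seq (X * 'I_k)) : seq (Tcar k X * 'I_k) :=
  [seq ((take i s, nth d s i), (nth d s i).2) | i <- iota 0 (size s)].

Lemma take_Lgen X (d d' : X * 'I_k) s N : take N (Lgen d s) = Lgen d' (take N s).
Proof.
rewrite /Lgen -map_take take_iota size_take_min.
apply/eq_in_map => i; rewrite mem_iota add0n => /andP [_ Hi].
have HiN : i < N by lia.
have His : i < size s by lia.
rewrite take_takel ?(ltnW HiN) // nth_take //.
by rewrite (set_nth_default d' d His).
Qed.

Lemma Lgen_rcons X (d : X * 'I_k) s x :
  Lgen d (rcons s x) = rcons (Lgen x s) ((s, x), x.2).
Proof.
rewrite /Lgen size_rcons -addn1 iotaD map_cat cats1 /= add0n.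
rewrite nth_rcons ltnn eqxx -[rcons s x]cats1 take_size_cat //; congr rcons.
apply/eq_in_map => i; rewrite mem_iota add0n => /andP [_ Hi].
by rewrite takel_cat ?(ltnW Hi) // nth_cat Hi (set_nth_default x d Hi).
Qed.

Lemma tolist_delta X (u : Tcar k X) d : tolist (delta u) = Lgen d (tolist u).
Proof. by case: u => s x; rewrite /tolist /= Lgen_rcons. Qed.

Lemma Lgen_snd X (d : X * 'I_k) s : map snd (Lgen d s) = map snd s.
Proof.
rewrite /Lgen -map_comp.
transitivity (map snd (mkseq (nth d s) (size s))); last by rewrite mkseq_nth.
rewrite /mkseq -map_comp. by apply: eq_map.
Qed.

Lemma prefix_Lgen X (d : X * 'I_k) l1 l2 :
  is_prefix l1 l2 -> is_prefix (Lgen d l1) (Lgen d l2).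
Proof.
move=> [w ->]; exists (drop (size l1) (Lgen d (l1 ++ w))).
have E : Lgen d l1 = take (size l1) (Lgen d (l1 ++ w)) by rewrite (take_Lgen d d) take_size_cat.
by rewrite E cat_take_drop.
Qed.

Lemma prefix_map X Y (f : X -> Y) l1 l2 :
  is_prefix l1 l2 -> is_prefix (map f l1) (map f l2).
Proof. by move=> [w ->]; exists (map f w); rewrite map_cat. Qed.

Lemma tolist_Tmap X Y (f : X -> Y) (u : Tcar k X) :
  tolist (Tmap f u) = map (fun y => (f y.1, y.2)) (tolist u).
Proof. by rewrite /tolist map_rcons. Qed.

Lemma peb_map X Y (u v : Tcar k X) (u' v' : Tcar k Y) :
  map snd (tolist u') = map snd (tolist u) ->
  map snd (tolist v') = map snd (tolist v) -> u'.2.2 = u.2.2 ->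
  Defs.comparable (tolist u) (tolist v) -> peb_cond u v -> peb_cond u' v'.
Proof.
move=> Hu Hv Hp Hc Hpc w y [z Hz]; rewrite Hp.
have Su : size (tolist u') = size (tolist u) by rewrite -(size_map snd) Hu size_map.
have Sv : size (tolist v') = size (tolist v) by rewrite -(size_map snd) Hv size_map.
have Sz := f_equal size Hz; rewrite !size_cat size_rcons in Sz.
case: Hc => [[w0 Hw0] | [w0 Hw0]]; last first.
  have := f_equal size Hw0; rewrite size_cat; lia.
have Hm := f_equal (map snd) Hz.
rewrite Hv Hw0 !map_cat Hu -catA in Hm.
have Hm2 : map snd w0 = map snd (rcons w y) ++ map snd z.
  have := f_equal (drop (size (map snd (tolist u)))) Hm.
  by rewrite !drop_size_cat.
have Sw0 : size w < size w0.
  have := f_equal size Hm2; rewrite size_cat !size_map size_rcons; lia.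
have := Hpc (take (size w) w0) (nth u.2 w0 (size w)).
have -> : (nth u.2 w0 (size w)).2 = y.2.
  have := f_equal (fun l => nth u.2.2 l (size w)) Hm2.
  rewrite (nth_map u.2) // => ->.
  by rewrite map_rcons nth_cat size_rcons size_map ltnSn nth_rcons size_map ltnn eqxx.
apply; exists (drop (size w).+1 w0).
by rewrite Hw0 -catA -(take_nth u.2 Sw0) cat_take_drop.
Qed.

Lemma sig_eq (A : Type) (R : A -> Prop) (a b : A) (pa : R a) (pb : R b) :
  a = b -> exist R a pa = exist R b pb.
Proof. move=> E; subst b; by rewrite (proof_irrelevance _ pa pb). Qed.

Lemma approx_refl X (u : Tcar k X) : approx n u u.
Proof. by split. Qed.

Lemma q_eq X (u v : Tcar k X) : approx n u v -> q n u = q n v.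
Proof.
move=> [H1 H2]; rewrite /q.
have E : approx n u = approx n v.
  apply: functional_extensionality => w; apply: propositional_extensionality.
  rewrite /approx H1 H2; by split.
by apply: sig_eq.
Qed.

Lemma rep_spec X (c : Hcar k n X) : proj1_sig c = approx n (rep c).
Proof.
rewrite /rep; case: (constructive_indefinite_description _ _) => /= x Hx //.
Qed.

Lemma q_rep X (c : Hcar k n X) : q n (rep c) = c.
Proof.
case: c => P pf; rewrite /q.
apply: sig_eq; by rewrite -rep_spec.
Qed.

Lemma rep_q X (u : Tcar k X) : approx n u (rep (q n u)).
Proof.
have := rep_spec (q n u) => /= ->; exact: approx_refl.
Qed.

Lemma approx_sym X (u v : Tcar k X) : approx n u v -> approx n v u.
Proof. by move=> [H1 H2]; split; symmetry. Qed.

Lemma approx_Tmap X Y (g : X -> Y) (u v : Tcar k X) :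
  approx n u v -> approx n (Tmap g u) (Tmap g v).
Proof.
move=> [H1 H2]; split; rewrite /= ?H1 //.
rewrite (@alpha_map k n _ _ (fun y : X * 'I_k => (g y.1, y.2))) // (@alpha_map k n _ _ (fun y : X * 'I_k => (g y.1, y.2))) //.
by rewrite H2.
Qed.

Lemma Hmap_q X Y (g : X -> Y) (u : Tcar k X) : Hmap n g (q n u) = q n (Tmap g u).
Proof. apply: q_eq; apply: approx_Tmap; apply: approx_sym; exact: rep_q. Qed.

End M.

Lemma delta_approx k n X (u v : Tcar k X) :
  approx n u v -> q n (Tmap (q n) (delta u)) = q n (Tmap (q n) (delta v)).
Proof.
move=> Huv; apply: q_eq; split; first by apply: q_eq.
set h := fun y : Tcar k X * 'I_k => (q n y.1, y.2).
change (alpha n (map h (Lgen u.2 u.1)) u.2.2 = alpha n (map h (Lgen v.2 v.1)) v.2.2).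
have Hs : forall w : Tcar k X, map snd w.1 = map snd (map h (Lgen w.2 w.1)).
  by move=> w; rewrite -map_comp (eq_map (g := snd)) // Lgen_snd.
rewrite (@alpha_rel k n _ _ u.1 _ u.2.2 (Hs u)) (@alpha_rel k n _ _ v.1 _ v.2.2 (Hs v)).
case: Huv => _ Ha; rewrite -Ha.
set A := alpha n u.1 u.2.2.
have Hu : A = reshape (shape A) u.1 by exact: alpha_self.
have Hv : A = reshape (shape A) v.1 by rewrite /A Ha; exact: alpha_self.
have Ht : take (sumn (shape A)) u.1 = take (sumn (shape A)) v.1.
  by rewrite -!flatten_reshape -Hu -Hv.
rewrite reshape_take [in RHS]reshape_take -(map_take _ h (Lgen u.2 u.1)) -(map_take _ h (Lgen v.2 v.1)).
by rewrite !(take_Lgen _ u.2) Ht.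
Qed.

Lemma Lgen_map k X Y (f : X -> Y) (d : X * 'I_k) s :
  Lgen (f d.1, d.2) (map (fun y => (f y.1, y.2)) s) =
  map (fun y => (Tmap f y.1, y.2)) (Lgen d s).
Proof.
rewrite /Lgen size_map -map_comp; apply/eq_in_map => i; rewrite mem_iota add0n => /andP [_ Hi].
by rewrite /= -map_take (nth_map d).
Qed.

Theorem lemma3p11 (sg : signature) (n k : nat) (n_gt0 : 0 < n) (n_le_k : n <= k) :
  (* (a) counit eps^{n,k} *)
  (forall A : structure sg,
     exists! e : H k n A -> A,
       is_hom e /\ forall u : Tcar k A, eps u = e (q n u)) /\
  (* (b) q_n o T_k q_n o delta is constant on ~_n-classes *)
  (forall (A : structure sg) (u v : Tcar k A),
     approx n u v ->
     q n (Tmap (q n) (delta u)) = q n (Tmap (q n) (delta v))) /\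
  (* the induced comultiplication delta^{n,k} (a homomorphism) *)
  (forall A : structure sg,
     exists! d : H k n A -> H k n (H k n A),
       is_hom d /\ forall u : Tcar k A, d (q n u) = q n (Tmap (q n) (delta u))) /\
  (* naturality of eps^{n,k} *)
  (forall (A B : structure sg) (f : A -> B), is_hom f ->
     forall (eA : H k n A -> A) (eB : H k n B -> B),
       (forall u : Tcar k A, eps u = eA (q n u)) ->
       (forall u : Tcar k B, eps u = eB (q n u)) ->
       forall c : H k n A, f (eA c) = eB (Hmap n f c)) /\
  (* naturality of delta^{n,k} *)
  (forall (A B : structure sg) (f : A -> B), is_hom f ->
     forall (dA : H k n A -> H k n (H k n A)) (dB : H k n B -> H k n (H k n B)),
       (forall u : Tcar k A, dA (q n u) = q n (Tmap (q n) (delta u))) ->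
       (forall u : Tcar k B, dB (q n u) = q n (Tmap (q n) (delta u))) ->
       forall c : H k n A, Hmap n (Hmap n f) (dA c) = dB (Hmap n f c)).
Proof.
split; [|split; [|split; [|split]]].
- move=> A; exists (fun c => eps (rep c)); split; first split.
  + move=> R t /= [t' [Ht' [_ [Hr _]]]].
    have -> : (fun i => eps (rep (t i))) = (fun i => eps (t' i)).
      apply: functional_extensionality => i; rewrite -Ht'; symmetry.
      exact: (proj1 (rep_q n (t' i))).
    exact: Hr.
  + move=> u; exact: (proj1 (rep_q n u)).
  + move=> e' [_ He']; apply: functional_extensionality => c.
    by rewrite -{2}(q_rep c) -He'.
- move=> A u v; exact: delta_approx.
- move=> A; exists (fun c => q n (Tmap (q n) (delta (rep c)))); split; first split.
  + move=> R t /= [t' [Ht' [Hc [Hr Hp]]]].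
    set h := fun y : Tcar k A * 'I_k => (q n y.1, y.2).
    have TD : forall (w : Tcar k A) d, tolist (Tmap (q n) (delta w)) = map h (Lgen d (tolist w)).
      by move=> w d; rewrite tolist_Tmap; congr map; exact: tolist_delta.
    have TS : forall w : Tcar k A, map snd (tolist (Tmap (q n) (delta w))) = map snd (tolist w).
      by move=> w; rewrite (TD w w.2) -map_comp (eq_map (g := snd)) // Lgen_snd.
    exists (fun i => Tmap (q n) (delta (t' i))); split.
      move=> i; rewrite -Ht'; apply: delta_approx; exact: rep_q.
    split; [|split].
    * move=> i j; rewrite /Defs.comparable !(TD _ (t' i).2).
      by case: (Hc i j) => Hpre; [left|right]; apply: prefix_map; apply: prefix_Lgen.
    * exists t'; split => //.
    * move=> i j; apply: (@peb_map k _ _ (t' i) (t' j)) => //; exact: TS.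
  + move=> u /=; apply: delta_approx; apply: approx_sym; exact: rep_q.
  + move=> d' [_ Hd']; apply: functional_extensionality => c.
    by rewrite -{2}(q_rep c) Hd'.
- move=> A B f _ eA eB HA HB c.
  by rewrite -(q_rep c) -HA Hmap_q -HB.
- move=> A B f _ dA dB HA HB c.
  rewrite -(q_rep c) HA Hmap_q Hmap_q HB; congr (q n _).
  case: (rep c) => s x; rewrite /Tmap /delta /=.
  rewrite Hmap_q; congr (_, _).
  have := Lgen_map f x s; rewrite /Lgen => ->.
  by rewrite -!map_comp; apply: eq_map => y /=; rewrite Hmap_q.
Qed.
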